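(* Let $k \ge 3$ be an integer and let $G=(V,E)$ be a graph. Let $G'=(V',E')$ be the star with $V'=\{a\}\cup V$ (where $a\notin V$ is a new vertex) and $E'=\{(a,v): v\in V\}$, and let $P=\{(u,v): (u,v)\in E\}$. Then $G$ admits a proper vertex coloring using $k$ colors if and only if the edges of $G'$ can be colored using $k$ colors such that for every pair $(u,v)\in P$ there is a geodesic rainbow path between $u$ and $v$ in $G'$.
   Context: Edge colorings are not required to be proper. A path in an edge-colored graph is a rainbow path if no two of its edges have the same color. A geodesic path between $u$ and $v$ is a shortest path between $u$ and $v$. *)

(* Defs.v *)
From mathcomp Require Import all_boot.
Set Implicit Arguments. Unset Strict Implicit. Unset Printing Implicit Defensive.

Definition simple_graph (T : finType) (e : rel T) : Prop :=
  symmetric e /\ irreflexive e.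

Definition proper_vertex_coloring (T : finType) (e : rel T) (k : nat)
  (f : T -> 'I_k) : Prop :=
  forall x y, e x y -> f x != f y.

(* An edge coloring with k colors assigns a color to each unordered pair
   {x, y}; only its values on edges matter. A path from u is a sequence
   p of successive vertices (u :: p is an e-path); its edges are the
   consecutive pairs and its length is size p. *)
Definition is_path (T : finType) (e : rel T) (u v : T) (p : seq T) : bool :=
  path e u p && (last u p == v).

Definition edge_colors (T : finType) (k : nat) (c : {set T} -> 'I_k)
  (u : T) (p : seq T) : seq 'I_k :=
  pairmap (fun x y => c [set x; y]) u p.

Definition rainbow (T : finType) (k : nat) (c : {set T} -> 'I_k)
  (u : T) (p : seq T) : bool :=
  uniq (edge_colors c u p).

Definition geodesic (T : finType) (e : rel T) (u v : T) (p : seq T) : Prop :=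
  is_path e u v p /\ forall q, is_path e u v q -> size p <= size q.

Definition has_geodesic_rainbow_path (T : finType) (e : rel T) (k : nat)
  (c : {set T} -> 'I_k) (u v : T) : Prop :=
  exists p, geodesic e u v p /\ rainbow c u p.

(* The star over V: vertex set option V, new center a = None,
   edges {None, Some v} for v in V. *)
Definition star_rel (V : finType) : rel (option V) :=
  fun x y => ((x == None) && (y != None)) || ((y == None) && (x != None)).

(* Main.v *)
Require Import Defs.
From mathcomp Require Import all_boot.

Lemma star_path2 (V : finType) (u v : V) :
  is_path (@star_rel V) (Some u) (Some v) [:: None; Some v].
Proof. by rewrite /is_path /= /star_rel /= eqxx. Qed.

Lemma star_short (V : finType) (u v : V) q :
  u != v -> is_path (@star_rel V) (Some u) (Some v) q -> 1 < size q.
Proof.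
move=> nuv; case: q => [|x [|y q]] //=; rewrite /is_path /=.
- by move/eqP => [] /eqP; rewrite (negbTE nuv).
- rewrite andbT; case: x => [x|] //=.
Qed.

Theorem lemma1 (k : nat) (V : finType) (e : rel V) :
  3 <= k -> simple_graph e ->
  (exists f : V -> 'I_k, proper_vertex_coloring e f) <->
  (exists c : {set option V} -> 'I_k,
     forall u v : V, e u v ->
       has_geodesic_rainbow_path (@star_rel V) c (Some u) (Some v)).
Proof.
move=> k3 [esym eirr]; have k0 : 0 < k by apply: leq_trans k3.
have neq u v : e u v -> u != v.
  by move=> h; apply/eqP => E; move: h; rewrite E eirr.
split.
- move=> [f pf].
  pose c (S : {set option V}) : 'I_k :=
    if [pick v | Some v \in S] is Some v then f v else Ordinal k0.
  have cE v : c [set None; Some v] = f v.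
    rewrite /c; case: pickP => [w|].
      by rewrite !inE /= => /eqP [] ->.
    by move/(_ v); rewrite !inE eqxx orbT.
  have cE' v : c [set Some v; None] = f v by rewrite setUC cE.
  exists c => u v huv; exists [:: None; Some v]; split; last first.
    by rewrite /rainbow /edge_colors /= cE cE' andbT inE pf.
  split; first exact: star_path2.
  by move=> q; apply: star_short (neq _ _ huv).
- move=> [c hc]; exists (fun v => c [set None; Some v]) => u v huv.
  have [p [[pp gp] rp]] := hc u v huv.
  have := gp _ (@star_path2 V u v); have := @star_short V u v p (neq _ _ huv) pp.
  case: p pp rp {gp} => [|x [|y [|z p]]] //= pp rp _ _.
  move: pp; rewrite /is_path /=; case: x rp => [x|] //= rp.
  case: y rp => [y|] //= rp; rewrite /star_rel /= => /eqP [] <-.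
  move: rp; rewrite /rainbow /edge_colors /= inE andbT setUC. done.
Qed.
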